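(* Let $1\le r\le n$ and let $P_1,\dots,P_n$ be PRDS p-values satisfying the strong alternatives assumption: for every $\alpha>0$ and every $i$, $\sup_{\theta_i\in\Theta_{1i}}\Pr_{\theta_i}(P_i\le\alpha)=1$. Let $f(P_1,\dots,P_n)$ be a valid monotone p-value for $H_0^{r/n}$, and for $u\subset\{1,\dots,n\}$ with $|u|=n-r+1$ define $$g_u(\boldsymbol p_u)=\inf_{\boldsymbol p_{-u}\in(0,1]^{r-1}} f(p_1,\dots,p_n).$$ Then $g_u$ is a valid monotone meta-analysis p-value for $H_{0u}$.
   Context: Component hypotheses $H_{0i}:\theta_i\in\Theta_{0i}$ vs $H_{1i}:\theta_i\in\Theta_{1i}$ ($\Theta_i=\Theta_{0i}\cup\Theta_{1i}$ disjoint), $i=1,\dots,n$; $P_i$ has distribution $\Pr_{\theta_i}$ and each $P_i$ is valid: $\sup_{\theta_i\in\Theta_{0i}}\Pr_{\theta_i}(P_i\le\alpha)\le\alpha$ for all $\alpha\in[0,1]$. The joint law of $\boldsymbol P$ is $\Pr_\theta$, $\theta\in\prod_i\Theta_i$. PRDS means positively regression dependent in the sense of Benjamini and Yekutieli (2001) under every $\theta$; in particular $\Pr_\theta(P_1\le p_1,\dots,P_n\le p_n)\ge\prod_i\Pr_{\theta_i}(P_i\le p_i)$ for all $\boldsymbol p\in[0,1]^n$ and all $\theta$. For $u\subset\{1,\dots,n\}$, $-u$ is its complement, $\boldsymbol p_u=(p_j)_{j\in u}$, $H_{0u}$: $\theta_j\in\Theta_{0j}$ for all $j\in u$ (null space $\Theta_{0u}$).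 $H_0^{r/n}$: at most $r-1$ of the $H_{0i}$ are false, null space $\Theta_0^{r/n}$. A combined p-value $f$ is valid for $H_0^{r/n}$ if $\sup_{\theta\in\Theta_0^{r/n}}\Pr_\theta(f(\boldsymbol P)\le\alpha)\le\alpha$ for all $\alpha\in[0,1]$, and monotone if $f$ is non-decreasing in each argument; a meta-analysis p-value $g_u$ is valid for $H_{0u}$ if $\sup_{\theta_u\in\Theta_{0u}}\Pr_{\theta_u}(g_u(\boldsymbol P_u)\le\alpha)\le\alpha$ for all $\alpha$. *)

(* Defs.v *)
From HB Require Import structures.
From mathcomp Require Import all_boot all_order all_algebra.
From mathcomp Require Import all_classical all_reals all_analysis.
Set Implicit Arguments. Unset Strict Implicit. Unset Printing Implicit Defensive.
Import Order.TTheory GRing.Theory Num.Theory.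
Local Open Scope classical_set_scope.
Local Open Scope ring_scope.

Section Defs.
Variable R : realType.
Variable n : nat.

Definition prod_borel : set (set ('I_n -> R)) :=
  <<s [set (fun p : 'I_n -> R => p i) @^-1` B | i in [set: 'I_n] & B in
        [set B : set R | measurable B]] >>.

Definition borel_fun (f : ('I_n -> R) -> R) : Prop :=
  forall B : set R, measurable B -> prod_borel (f @^-1` B).

Definition in_cube (u : {set 'I_n}) (p : 'I_n -> R) : Prop :=
  forall i, i \in u -> 0 <= p i <= 1.

Definition monotone_on_cube {disp : Order.disp_t} {T : porderType disp}
  (u : {set 'I_n}) (f : ('I_n -> R) -> T) : Prop :=
  forall p q, in_cube u p -> in_cube u q ->
    (forall i, i \in u -> p i <= q i) -> (f p <= f q)%O.

Definition g_inf (u : {set 'I_n}) (f : ('I_n -> R) -> R) (p : 'I_n -> R) : \bar R :=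
  ereal_inf [set (f (fun i => if i \in u then p i else q i))%:E
            | q in [set q : 'I_n -> R | forall i, i \notin u -> 0 < q i <= 1]].

End Defs.

Section Model.
Variables (R : realType) (n : nat) (d : measure_display) (Omega : measurableType d)
  (T : Type) (Theta Theta0 : 'I_n -> set T)
  (Pr : ('I_n -> T) -> probability Omega R) (P : 'I_n -> Omega -> R).

Definition in_param (theta : 'I_n -> T) : Prop := forall i, Theta i (theta i).
Definition Theta1 (i : 'I_n) : set T := Theta i `\` Theta0 i.

Definition sigmaP (u : {set 'I_n}) : set (set Omega) :=
  <<s [set P j @^-1` B | j in [set j | j \in u] & B in
        [set B : set R | measurable B]] >>.

Definition marginals_consistent : Prop :=
  forall (u : {set 'I_n}) theta theta', in_param theta -> in_param theta' ->
    (forall i, i \in u -> theta i = theta' i) ->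
    forall A, sigmaP u A -> Pr theta A = Pr theta' A.

Definition components_valid : Prop :=
  forall i theta, in_param theta -> Theta0 i (theta i) ->
    forall alpha : R, 0 <= alpha <= 1 ->
      (Pr theta [set w | (P i w <= alpha)%R] <= alpha%:E)%E.

(* Consequence of PRDS recorded in the context (lower-orthant dependence) *)
Definition lower_orthant_dependent : Prop :=
  forall theta, in_param theta -> forall p : 'I_n -> R, (forall i, 0 <= p i <= 1) ->
    \prod_(i < n) fine (Pr theta [set w | P i w <= p i])
      <= fine (Pr theta [set w | forall i, P i w <= p i]).

Definition strong_alternatives : Prop :=
  forall (alpha : R), 0 < alpha -> forall i,
    ereal_sup [set Pr theta [set w | P i w <= alpha]
              | theta in [set theta | in_param theta /\ Theta1 i (theta i)]] = 1%E.

Definition in_null_rn (r : nat) (theta : 'I_n -> T) : Prop :=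
  in_param theta /\ exists s : {set 'I_n}, (#|s| <= r.-1)%N /\
     forall i, i \notin s -> Theta0 i (theta i).

Definition in_null_u (u : {set 'I_n}) (theta : 'I_n -> T) : Prop :=
  in_param theta /\ forall i, i \in u -> Theta0 i (theta i).

Definition valid_rn (r : nat) (f : ('I_n -> R) -> R) : Prop :=
  forall theta, in_null_rn r theta -> forall alpha : R, 0 <= alpha <= 1 ->
    (Pr theta [set w | (f (fun i => P i w) <= alpha)%R] <= alpha%:E)%E.

Definition valid_u (u : {set 'I_n}) (g : ('I_n -> R) -> \bar R) : Prop :=
  forall theta, in_null_u u theta -> forall alpha : R, 0 <= alpha <= 1 ->
    (Pr theta [set w | (g (fun i => P i w) <= alpha%:E)%E] <= alpha%:E)%E.

End Model.

(* Main.v *)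
Require Import Defs.
From HB Require Import structures.
From mathcomp Require Import all_boot all_order all_algebra.
From mathcomp Require Import all_classical all_reals all_analysis.
From mathcomp Require Import zify ring lra.
Import Order.TTheory GRing.Theory Num.Theory.
Local Open Scope classical_set_scope.
Local Open Scope ring_scope.

Lemma preim_sigma (R : realType) (n : nat) (Om : Type) (G : set (set Om))
  (h : Om -> ('I_n -> R)) :
  sigma_algebra setT G ->
  (forall i (B : set R), measurable B -> G (h @^-1` [set p | B (p i)])) ->
  forall S, prod_borel S -> G (h @^-1` S).
Proof.
move=> [G0 GC GU] Hg S; rewrite /prod_borel.
have : sigma_algebra setT [set S | G (h @^-1` S)].
  split => /=; first by rewrite preimage_set0.
  - by move=> A GA; rewrite !setTD preimage_setC -setTD; apply: GC.
  - by move=> A GA; rewrite preimage_bigcup; apply: GU.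
move=> sig; apply: (smallest_sub sig).
move=> X [i _ [B mB <-]]. exact: Hg.
Qed.

Lemma sigmaP_meas (R : realType) (n : nat) d (Om : measurableType d)
  (P : 'I_n -> Om -> R) (u : {set 'I_n}) :
  (forall i, measurable_fun setT (P i)) -> forall A, sigmaP P u A -> measurable A.
Proof.
move=> mP; rewrite /sigmaP; apply: smallest_sub; first exact: sigma_algebra_measurable.
move=> X [j _ [B mB <-]].
by have := mP j measurableT B mB; rewrite setTI.
Qed.

Lemma sigmaP_sa (R : realType) (n : nat) d (Om : measurableType d)
  (P : 'I_n -> Om -> R) (u : {set 'I_n}) : sigma_algebra setT (sigmaP P u).
Proof. exact: smallest_sigma_algebra. Qed.

Lemma sigmaP_vec (R : realType) (n : nat) d (Om : measurableType d)
  (P : 'I_n -> Om -> R) (u : {set 'I_n}) (c : 'I_n -> R) S :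
  prod_borel S ->
  sigmaP P u ((fun w => fun i => if i \in u then P i w else c i) @^-1` S).
Proof.
apply: preim_sigma; first exact: sigmaP_sa.
have [S0 SC _] := @sigmaP_sa R n d Om P u.
move=> i B mB /=.
case: (boolP (i \in u)) => iu.
  apply: sub_sigma_algebra; exists i => //; exists B => //.
  by apply/seteqP; split => w /=; rewrite iu.
have [Bc|nBc] := pselect (B (c i)).
  rewrite (_ : _ @^-1` _ = setT).
    by rewrite -(setD0 setT); exact: (SC _ S0).
  by apply/seteqP; split => // w _ /=; rewrite (negbTE iu).
rewrite (_ : _ @^-1` _ = set0) //.
by apply/seteqP; split => // w /=; rewrite (negbTE iu).
Qed.
Lemma mono_part (R : realType) (n : nat) (f : ('I_n -> R) -> R) (u : {set 'I_n}) :
  monotone_on_cube [set: 'I_n] f -> monotone_on_cube u (g_inf u f).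
Proof.
move=> mf p q cp cq pq.
apply: le_ereal_inf_tmp => _ [q' /= hq' <-].
apply: ge_ereal_inf; exists (f (fun i => if i \in u then p i else q' i))%:E.
  by exists q'.
rewrite lee_fin; apply: mf.
- move=> i _; case: ifP => iu; first exact: cp.
  by have /andP[/ltW -> ->] := hq' i (negbT iu).
- move=> i _; case: ifP => iu; first exact: cq.
  by have /andP[/ltW -> ->] := hq' i (negbT iu).
- by move=> i _; case: ifP => iu //; apply: pq.
Qed.
Lemma union_bound d (Om : measurableType d) (R : realType)
  (mu : {measure set Om -> \bar R}) (I : Type) (s : seq I) (F : I -> set Om) :
  (forall i, measurable (F i)) ->
  (mu (\big[setU/set0]_(i <- s) F i) <= \sum_(i <- s) mu (F i))%E.
Proof.
move=> mF; elim: s => [|a s IH]; first by rewrite !big_nil measure0.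
rewrite !big_cons; apply: le_trans (measureU2 _ _ _) _ => //.
  by apply: bigsetU_measurable => i _.
by apply: leeD.
Qed.

Lemma in_bigU (Om : Type) (I : eqType) (s : seq I) (F : I -> set Om) j w :
  j \in s -> F j w -> (\big[setU/set0]_(i <- s) F i) w.
Proof.
elim: s => [//|a s IH]; rewrite inE big_cons => /orP[/eqP <- Fw|js Fw]; first by left.
by right; apply: IH.
Qed.

Lemma full_vec (R : realType) (n : nat) (Om : Type) (P : 'I_n -> Om -> R) :
  (fun w => fun i => if i \in [set: 'I_n]%SET then P i w else 0) = (fun w i => P i w).
Proof. by apply/funext => w; apply/funext => i; rewrite inE. Qed.

Lemma meas_full (R : realType) (n : nat) d (Om : measurableType d)
  (P : 'I_n -> Om -> R) S :
  (forall i, measurable_fun setT (P i)) -> prod_borel S ->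
  measurable ((fun w i => P i w) @^-1` S).
Proof.
move=> mP pS; rewrite -(@full_vec R n Om P).
apply: (@sigmaP_meas R n d Om P [set: 'I_n]) => //.
exact: (@sigmaP_vec R n d Om P _ (fun _ => 0) S pS).
Qed.

Lemma sigmaP1 (R : realType) (n : nat) d (Om : measurableType d)
  (P : 'I_n -> Om -> R) (j : 'I_n) (e : R) :
  sigmaP P [set j] [set w | P j w <= e].
Proof.
apply: sub_sigma_algebra; exists j; first by rewrite /= inE.
exists `]-oo, e]%classic; first exact: measurable_itv.
by apply/seteqP; split => w /=; rewrite in_itv.
Qed.

Lemma sum_cst_seq (R : realType) (I : Type) (s : seq I) (x : R) :
  (\sum_(i <- s) x%:E)%E = ((size s)%:R * x)%:E.
Proof.
elim: s => [|a s IH]; first by rewrite big_nil mul0r.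
by rewrite big_cons IH /= -EFinD -[in RHS]addn1 natrD mulrDl mul1r addrC.
Qed.

Lemma keyA (R : realType) (n r : nat) (d : measure_display)
  (Omega : measurableType d) (T : Type) (Theta Theta0 : 'I_n -> set T)
  (Pr : ('I_n -> T) -> probability Omega R) (P : 'I_n -> Omega -> R)
  (f : ('I_n -> R) -> R) (u : {set 'I_n}) :
  (1 <= r <= n)%N ->
  (forall i, measurable_fun setT (P i)) ->
  (forall i w, 0 <= P i w <= 1) ->
  (forall i, Theta0 i `<=` Theta i) ->
  marginals_consistent Theta Pr P ->
  strong_alternatives Theta Theta0 Pr P ->
  borel_fun f ->
  valid_rn Theta Theta0 Pr P r f ->
  monotone_on_cube [set: 'I_n] f ->
  #|u| = (n - r).+1 ->
  forall theta, in_null_u Theta Theta0 u theta ->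
  forall (a e : R), 0 <= a -> 0 < e -> 0 < e <= 1 ->
  (Pr theta [set w | (f (fun i => if i \in u then P i w else e) < a)%R] <= a%:E)%E.
Proof.
move=> hr mP P01 T0T mc sa bf vf mf cu theta [ptheta nth] a e a0 e0 e01.
set F := [set w | _].
have sF : sigmaP P u F.
  have -> : F = (fun w i => if i \in u then P i w else (fun _ => e) i) @^-1`
                 (f @^-1` `]-oo, a[%classic).
    by apply/seteqP; split => w /=; rewrite in_itv.
  apply: sigmaP_vec; apply: bf; exact: measurable_itv.
have mF : measurable F by apply: (@sigmaP_meas R n d Omega P u).
have [a1|a1] := leP 1 a.
  by apply: le_trans (probability_le1 _ mF) _; rewrite lee_fin.
apply/lee_addgt0Pr => eta eta0.
pose eta' := eta / n.+1%:R.
have eta'0 : 0 < eta' by rewrite /eta' divr_gt0// ltr0n.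
have hj : forall j : 'I_n, exists th : 'I_n -> T,
    (in_param Theta th /\ Theta1 Theta Theta0 j (th j)) /\
    ((1 - eta')%:E < Pr th [set w | (P j w <= e)%R])%E.
  move=> j; have hs := sa e e0 j.
  have : ((1 - eta')%:E < ereal_sup [set Pr th [set w | (P j w <= e)%R]
              | th in [set th | in_param Theta th /\ Theta1 Theta Theta0 j (th j)]])%E.
    by rewrite hs lte_fin gtrBl.
  by case/ereal_sup_gt => _ [th hth <-] lt; exists th.
have [th hth] := choice hj.
pose theta' := fun i => if i \in u then theta i else th i i.
have pth' : in_param Theta theta'.
  move=> i; rewrite /theta'; case: ifP => iu; first exact: ptheta.
  by have [[_ []]] := hth i.
have nrn : in_null_rn Theta Theta0 r theta'.
  split => //; exists (~: u); split.
    have := cardsC u; rewrite card_ord cu => h.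
    move/andP: hr => [h1 h2]. lia.
  move=> i; rewrite inE negbK => iu; rewrite /theta' iu; exact: nth.
have -> : Pr theta F = Pr theta' F.
  apply: (mc u theta theta' ptheta pth') => //.
  by move=> i iu; rewrite /theta' iu.
pose G := [set w | (f (fun i => P i w) <= a)%R].
pose U := \big[setU/set0]_(j <- enum (~: u)) [set w | (e < P j w)%R].
have mG : measurable G.
  have -> : G = (fun w i => P i w) @^-1` (f @^-1` `]-oo, a]%classic).
    by apply/seteqP; split => w /=; rewrite in_itv.
  apply: meas_full => //; apply: bf; exact: measurable_itv.
have mPj j : measurable [set w | (e < P j w)%R].
  have := mP j measurableT `]e, +oo[%classic (measurable_itv _).
  rewrite setTI; congr measurable.
  by apply/seteqP; split => w /=; rewrite in_itv /= andbT.
have mU : measurable U by apply: bigsetU_measurable => j _.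
have FGU : F `<=` G `|` U.
  move=> w Fw.
  have [[j [ju ej]]|nj] := pselect (exists j, j \notin u /\ (e < P j w)%R).
    right; apply: (@in_bigU _ _ _ _ j) => //.
    by rewrite mem_enum inE.
  left; rewrite /G /=; apply: le_trans (ltW Fw).
  apply: mf.
  - by move=> i _.
  - move=> i _; case: ifP => _ //; rewrite (ltW e0) /=; by case/andP: e01.
  - move=> i _; case: ifP => iu //.
    rewrite leNgt; apply/negP => lt; apply: nj; exists i; split => //.
    by rewrite iu.
have h1 := le_measure (Pr theta') (mem_set mF) (mem_set (measurableU _ _ mG mU)) FGU.
apply: (le_trans h1).
apply: le_trans (measureU2 _ mG mU) _.
apply: leeD; first by apply: vf => //; rewrite a0 ltW.
apply: (le_trans (@union_bound _ _ _ (Pr theta') _ (enum (~: u)) _ mPj)).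
apply: (@le_trans _ _ (\sum_(j <- enum (~: u)) eta'%:E)%E).
  rewrite big_seq [X in (_ <= X)%E]big_seq; apply: lee_sum => j.
  rewrite mem_enum inE => ju.
  have hPc : [set w | (e < P j w)%R] = ~` [set w | (P j w <= e)%R].
    by apply/seteqP; split => w /=; rewrite ltNge => /negP.
  have mPl : measurable [set w | (P j w <= e)%R].
    exact: (@sigmaP_meas R n d Omega P [set j]%SET mP _ (@sigmaP1 R n d Omega P j e)).
  rewrite hPc [X in (X <= _)%E](_ : _ = 1 - Pr theta' [set w | (P j w <= e)%R])%E; last exact: probability_setC.
  have -> : Pr theta' [set w | (P j w <= e)%R] = Pr (th j) [set w | (P j w <= e)%R].
    apply: (mc [set j]%SET theta' (th j) pth') => //; first by have [[]] := hth j.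
      by move=> i; rewrite inE => /eqP ->; rewrite /theta' (negbTE ju).
    exact: (@sigmaP1 R n d Omega P j e).
  have [_ lt] := hth j.
  have le1 := probability_le1 (Pr (th j)) mPl.
  have ge0 := measure_ge0 (Pr (th j)) [set w | (P j w <= e)%R].
  move: lt le1 ge0; case: (Pr (th j) _) => // x.
  rewrite !lte_fin !lee_fin => k1 k2 k3.
  lra.
rewrite sum_cst_seq lee_fin.
have hs : ((size (enum (~: u)))%:R <= n%:R :> R).
  by rewrite ler_nat -cardE; have := max_card (~: u); rewrite card_ord.
have : eta' * n.+1%:R = eta by rewrite /eta' divfK // pnatr_eq0.
rewrite -natr1. nra.
Qed.

Lemma eps_gt (R : realType) (e : R) : 0 < e -> exists m : nat, (m.+1%:R)^-1 < e.
Proof.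
move=> e0; exists (Num.truncn e^-1).
rewrite -[X in _ < X](invrK e) ltf_pV2 ?posrE ?invr_gt0 ?ltr0n //.
exact: truncnS_gt.
Qed.

Lemma eps_01 (R : realType) (k : nat) : 0 < (k.+1%:R : R)^-1 <= 1.
Proof. by rewrite invr_gt0 ltr0n /= invf_le1 ?ltr0n // ler1n. Qed.

Lemma eps_anti (R : realType) (k k' : nat) : (k <= k')%N -> (k'.+1%:R : R)^-1 <= (k.+1%:R)^-1.
Proof. by move=> kk; rewrite lef_pV2 ?posrE ?ltr0n // ler_nat ltnS. Qed.

Lemma measFk (R : realType) (n : nat) (d : measure_display)
  (Omega : measurableType d) (P : 'I_n -> Omega -> R)
  (f : ('I_n -> R) -> R) (u : {set 'I_n}) (c b : R) :
  (forall i, measurable_fun setT (P i)) -> borel_fun f ->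
  measurable [set w | (f (fun i => if i \in u then P i w else c) < b)%R].
Proof.
move=> mP bf.
have -> : [set w | (f (fun i => if i \in u then P i w else c) < b)%R] =
   (fun w i => if i \in u then P i w else (fun _ => c) i) @^-1`
                 (f @^-1` `]-oo, b[%classic).
  by apply/seteqP; split => w /=; rewrite in_itv.
apply: (@sigmaP_meas R n d Omega P u mP).
apply: sigmaP_vec; apply: bf; exact: measurable_itv.
Qed.

Theorem lemma1 (R : realType) (n r : nat) (d : measure_display)
  (Omega : measurableType d) (T : Type) (Theta Theta0 : 'I_n -> set T)
  (Pr : ('I_n -> T) -> probability Omega R) (P : 'I_n -> Omega -> R)
  (f : ('I_n -> R) -> R) (u : {set 'I_n}) :
  (1 <= r <= n)%N ->
  (forall i, measurable_fun setT (P i)) ->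
  (forall i w, 0 <= P i w <= 1) ->
  (forall i, Theta0 i `<=` Theta i) ->
  marginals_consistent Theta Pr P ->
  components_valid Theta Theta0 Pr P ->
  lower_orthant_dependent Theta Pr P ->
  strong_alternatives Theta Theta0 Pr P ->
  borel_fun f ->
  valid_rn Theta Theta0 Pr P r f ->
  monotone_on_cube [set: 'I_n] f ->
  #|u| = (n - r).+1 ->
  valid_u Theta Theta0 Pr P u (g_inf u f) /\ monotone_on_cube u (g_inf u f).
Proof.
move=> hr mP P01 T0T mc cv lod sa bf vf mf cu.
split; last exact: mono_part.
move=> theta hth alpha /andP[a0 a1].
pose eps (k : nat) : R := (k.+1%:R)^-1.
pose Fk (dl : R) (k : nat) := [set w | (f (fun i => if i \in u then P i w else eps k) < alpha + dl)%R].
pose E := [set w | (g_inf u f (fun i => P i w) <= alpha%:E)%E].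
have mFk dl k : measurable (Fk dl k) by apply: measFk.
have vecmono w k k' : (k <= k')%N ->
    (f (fun i => if i \in u then P i w else eps k') <=
     f (fun i => if i \in u then P i w else eps k))%R.
  move=> kk; apply: mf.
  - by move=> i _; case: ifP => _ //; have /andP[/ltW -> ->] := eps_01 R k'.
  - by move=> i _; case: ifP => _ //; have /andP[/ltW -> ->] := eps_01 R k.
  - by move=> i _; case: ifP => _ //; exact: eps_anti.
have D dl : 0 < dl -> E `<=` \bigcup_k Fk dl k.
  move=> dl0 w Ew.
  have : (g_inf u f (fun i => P i w) < (alpha + dl)%:E)%E.
    by apply: le_lt_trans Ew _; rewrite lte_fin ltrDl.
  case/ereal_inf_lt => _ [q /= hq <-]; rewrite lte_fin => fq.
  have hm : forall j : 'I_n, exists m : nat, j \notin u -> eps m < q j.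
    move=> j; case: (boolP (j \in u)) => ju; first by exists 0%N.
    by have [m hm] := @eps_gt R _ (proj1 (andP (hq j ju))); exists m.
  have [m hmj] := choice hm.
  exists (\max_(j : 'I_n) m j)%N => //.
  rewrite /Fk /=; apply: le_lt_trans fq; apply: mf.
  - move=> i _; case: ifP => _ //; have /andP[/ltW -> ->] := eps_01 R (\max_(j : 'I_n) m j)%N; by [].
  - by move=> i _; case: ifP => iu //; have /andP[/ltW -> ->] := hq i (negbT iu).
  - move=> i _; case: ifP => iu //.
    apply: le_trans (ltW (hmj i (negbT iu))).
    by apply: eps_anti; exact: (leq_bigmax_cond i).
have C : E = \bigcap_m \bigcup_k Fk (eps m) k.
  apply/seteqP; split.
    move=> w Ew m _; apply: D => //; by have /andP[] := eps_01 R m.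
  move=> w hw; rewrite /E /=; apply/lee_addgt0Pr => e e0.
  have [m me] := @eps_gt R _ e0.
  have [k _ Fkw] := hw m I.
  apply: ge_ereal_inf; exists (f (fun i => if i \in u then P i w else eps k))%:E.
    exists (fun _ => eps k) => //= j _; exact: eps_01.
  rewrite lee_fin; apply: ltW; apply: lt_le_trans Fkw _.
  by rewrite lerD2l ltW.
have mE : measurable E.
  rewrite C; apply: bigcapT_measurable => m; exact: bigcupT_measurable.
have B dl : 0 < dl -> (Pr theta (\bigcup_k Fk dl k) <= (alpha + dl)%:E)%E.
  move=> dl0.
  have nd : nondecreasing_seq (Fk dl).
    apply/nondecreasing_seqP => k; apply/subsetPset => w /=.
    move=> h; apply: le_lt_trans h; exact: vecmono.
  have cv0 := @nondecreasing_cvg_mu _ _ _ (Pr theta) (Fk dl) (mFk dl) (bigcupT_measurable _ (mFk dl)) nd.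
  apply: (cvge_to_le cv0); apply: nearW => k /=.
  have h1 : 0 <= alpha + dl by rewrite addr_ge0 // ltW.
  have [h2 h3] : 0 < eps k /\ 0 < eps k <= 1.
    by have /andP[? ?] := eps_01 R k; split => //; apply/andP.
  exact: (@keyA R n r d Omega T Theta Theta0 Pr P f u hr mP P01 T0T mc sa bf vf mf cu theta hth (alpha + dl) (eps k) h1 h2 h3).
apply/lee_addgt0Pr => e e0.
apply: le_trans (B e e0).
exact: (le_measure (Pr theta) (mem_set mE) (mem_set (bigcupT_measurable _ (mFk e))) (D e e0)).
Qed.
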